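(* Let $E\subseteq E'\subseteq\binom{[n]}{2}$ and $K\in\mathbb{N}^{E'}$. If there exists $F\in W^K_{E,|E'|}$ with $\langle F,Q_{E'}\rangle\neq0$, then there exists $F'\in W^K_{E,|E|}$ with $\langle F',Q_E\rangle\neq0$.
   Context: $[n]=\{1,\dots,n\}$ and $\binom{[n]}{2}$ is the set of $2$-subsets of $[n]$. For a finite set $S$, $\mathbb{N}^S$ is the set of maps $S\to\mathbb{N}$, $\mathbb{N}^S_m=\{K\in\mathbb{N}^S:\sum_sK(s)=m\}$, $K!=\prod_sK(s)!$, and $K'\le K$ means pointwise inequality (maps on $E$ are compared with maps on $E'$ by extending by $0$). In $\mathbb{C}[x_1,\dots,x_n]$ define, for a set $E$ of $2$-subsets, $Q_E=\prod_{\{i,j\}\in E,\ i<j}(x_i-x_j)$ and for $K\in\mathbb{N}^E$, $H_E^K=\prod_{\{i,j\}\in E,\ i<j}(x_i+x_j)^{K(\{i,j\})}$. For $K\in\mathbb{N}^{E'}$ and $m\in\mathbb{N}$, $W^K_{E,m}$ is the complex linear span of $\{H_E^{K'}:K'\in\mathbb{N}^E_m,\ K'\le K\}$. On homogeneous polynomials of degree $m$ define $\langle f,g\rangle=\sum_{K\in\mathbb{N}^n_m}K!\,\mathrm{coe}(x^K,f)\overline{\mathrm{coe}(x^K,g)}$, where $x^K=\prod_ix_i^{K(i)}$ and $\mathrm{coe}(x^K,f)$ is the coefficient of $x^K$ in $f$. *)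

(* Defs.v *)
From HB Require Import structures.
From mathcomp Require Import all_boot all_order all_algebra.
From mathcomp Require Import mpoly.
Set Implicit Arguments. Unset Strict Implicit. Unset Printing Implicit Defensive.
Import Order.TTheory GRing.Theory Num.Theory.
Local Open Scope ring_scope.

(* Variables x_1..x_n are 'X_i for i : 'I_n (0-based).  A 2-subset {i,j} with
   i < j of [n] is encoded by the ordered pair (i, j) : 'I_n * 'I_n with i < j;
   a set E of 2-subsets is a {set 'I_n * 'I_n} all of whose elements satisfy
   p.1 < p.2. *)

Definition two_subsets (n : nat) (E : {set 'I_n * 'I_n}) : bool :=
  [forall p in E, (p.1 < p.2)%N].

Definition QE (C : numClosedFieldType) (n : nat) (E : {set 'I_n * 'I_n})
  : {mpoly C[n]} :=
  \prod_(p in E) ('X_p.1 - 'X_p.2).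

Definition HE (C : numClosedFieldType) (n : nat) (E : {set 'I_n * 'I_n})
  (K : 'I_n * 'I_n -> nat) : {mpoly C[n]} :=
  \prod_(p in E) ('X_p.1 + 'X_p.2) ^+ K p.

(* K' in N^E_m with K' <= K (only values on E are relevant). *)
Definition admissible (n : nat) (E : {set 'I_n * 'I_n}) (K : 'I_n * 'I_n -> nat)
  (m : nat) (K' : 'I_n * 'I_n -> nat) : Prop :=
  (\sum_(p in E) K' p)%N = m /\ (forall p, p \in E -> K' p <= K p)%N.

Definition inW (C : numClosedFieldType) (n : nat) (K : 'I_n * 'I_n -> nat)
  (E : {set 'I_n * 'I_n}) (m : nat) (F : {mpoly C[n]}) : Prop :=
  exists (N : nat) (c : 'I_N -> C) (k : 'I_N -> ('I_n * 'I_n -> nat)),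
    (forall t, admissible E K m (k t)) /\
    F = \sum_(t < N) c t *: HE C E (k t).

Definition inner (C : numClosedFieldType) (n m : nat) (f g : {mpoly C[n]}) : C :=
  \sum_(k : 'X_{1..n < m.+1} | mdeg k == m)
     (\prod_(i < n) (k i)`!)%:R * f@_k * (g@_k)^*.

(* Main.v *)
Require Import Defs.
From HB Require Import structures.
From mathcomp Require Import all_boot all_order all_algebra.
From mathcomp Require Import mpoly.
From mathcomp Require Import ring.
Import Order.TTheory GRing.Theory Num.Theory.
Local Open Scope ring_scope.
Set Implicit Arguments. Unset Strict Implicit.

Lemma fact_shift n (j : 'X_{1..n}) (a : 'I_n) :
  (\prod_(i < n) ((j + U_(a))%MM i)`!)%N = ((j a).+1 * \prod_(i < n) (j i)`!)%N.
Proof.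
rewrite (bigD1 a) //= [in RHS](bigD1 a) //= mnmDE mnm1E eqxx addn1 factS mulnA.
congr (_ * _)%N; apply: eq_bigr => i /negbTE ia.
by rewrite mnmDE mnm1E eq_sym ia addn0.
Qed.

Lemma inner_shift (C : numClosedFieldType) n k (a : 'I_n) (F H : {mpoly C[n]}) :
  inner k.+1 F (H * 'X_a) = inner k (mderiv a F) H.
Proof.
rewrite /inner.
rewrite (bigID (fun κ : 'X_{1..n < k.+2} => (0 < κ a)%N)) /=.
rewrite [X in _ + X]big1 ?addr0; last first.
  move=> κ /andP[_]; rewrite lt0n negbK => /eqP κa0.
  have -> : (H * 'X_a)@_κ = 0.
    apply: memN_msupp_eq0; apply/negP.
    rewrite (perm_mem (msuppMX H U_(a))) => /mapP [m' _ Em].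
    by move: κa0; rewrite Em mnmDE mnm1E eqxx.
  by rewrite rmorph0 mulr0.
have hP (j : 'X_{1..n < k.+1}) : (mdeg (j + U_(a))%MM < k.+2)%N.
  by rewrite mdegD mdeg1 addn1 ltnS bmdeg.
pose h (j : 'X_{1..n < k.+1}) : 'X_{1..n < k.+2} := BMultinom (hP j).
pose h' (κ : 'X_{1..n < k.+2}) : 'X_{1..n < k.+1} := insubd bm0 (κ - U_(a))%MM.
have le1 (κ : 'X_{1..n}) : (0 < κ a)%N -> (U_(a) <= κ)%MM.
  move=> κa; apply/mnm_lepP => i; rewrite mnm1E.
  by case: eqP => [<-|]. 
rewrite (reindex_onto h h') /=; last first.
  move=> κ /andP[/eqP dκ κa]; apply: val_inj => /=.
  rewrite /h' insubdK ?submK ?le1 //.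
  have e : mdeg (bmnm κ) = (mdeg (bmnm κ - U_(a))%MM + 1)%N.
    by rewrite -{1}(submK (le1 _ κa)) mdegD mdeg1.
  by rewrite unfold_in /= -(ltn_add2r 1) -e dκ addn1.
have h'h j : h' (h j) = j.
  apply: val_inj; rewrite /h' /h /= insubdK /=; first by rewrite addmK.
  by rewrite unfold_in /= addmK bmdeg.
apply: eq_big => j.
  rewrite h'h eqxx andbT /= mnmDE mnm1E eqxx addn1 /= andbT mdegD mdeg1 addn1.
  by [].
move=> _ /=.
rewrite fact_shift mcoeff_deriv addmC mcoeffMX addmC.
rewrite natrM mulrnAr; ring.
Qed.

Lemma inner_subl (C : numClosedFieldType) n k (F1 F2 H : {mpoly C[n]}) :
  inner k (F1 - F2) H = inner k F1 H - inner k F2 H.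
Proof. rewrite /inner -sumrB; apply: eq_bigr => κ _; by rewrite mcoeffB mulrBr mulrBl. Qed.

Lemma inner_subr (C : numClosedFieldType) n k (F H1 H2 : {mpoly C[n]}) :
  inner k F (H1 - H2) = inner k F H1 - inner k F H2.
Proof. rewrite /inner -sumrB; apply: eq_bigr => κ _; by rewrite mcoeffB rmorphB mulrBr. Qed.

Lemma inner_step (C : numClosedFieldType) n k (a b : 'I_n) (F G : {mpoly C[n]}) :
  inner k.+1 F (G * ('X_a - 'X_b)) = inner k (mderiv a F - mderiv b F) G.
Proof. by rewrite mulrBr inner_subr !inner_shift inner_subl. Qed.

Lemma mderiv_bigprod (C : numClosedFieldType) n (a : 'I_n) (T : eqType)
  (r : seq T) (g : T -> {mpoly C[n]}) :
  uniq r ->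
  mderiv a (\prod_(p <- r) g p) = \sum_(q <- r) mderiv a (g q) * \prod_(p <- r | p != q) g p.
Proof.
elim: r => [|x r IH] /=.
  by rewrite !big_nil -mpolyC1 mderivC.
case/andP => xr ur.
rewrite !big_cons mderivM IH // eqxx /= mulr_sumr.
congr (_ + _).
  congr (_ * _); rewrite big_seq_cond [RHS]big_seq_cond; apply: eq_bigl => p.
  rewrite andbT; case: (boolP (p \in r)) => //= pr; apply/esym/eqP => px.
  by rewrite -px pr in xr.
apply: eq_big_seq => q qr; rewrite big_cons.
have -> : (x != q). by apply/eqP => e; rewrite e qr in xr.
by rewrite mulrCA.
Qed.

Lemma mderiv_exp (C : numClosedFieldType) n (a : 'I_n) (L : {mpoly C[n]}) k :
  mderiv a (L ^+ k) = mderiv a L * L ^+ k.-1 *+ k.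
Proof.
elim: k => [|k IH]; first by rewrite expr0 mulr0n -mpolyC1 mderivC.
rewrite exprS mderivM IH; case: k {IH} => [|k] /=.
  by rewrite mulr0n mulr0 addr0.
by rewrite mulrnAr mulrCA -exprS -mulrS.
Qed.

Lemma mderivXi (C : numClosedFieldType) n (a i : 'I_n) :
  mderiv a ('X_i : {mpoly C[n]}) = ((i == a)%:R)%:MP.
Proof.
rewrite mderivX mnm1E; case: eqP => [->|_].
  by rewrite -{1}[U_(a)%MM]add0m addmK mpolyX0 scale1r mpolyC1.
by rewrite scale0r mpolyC0.
Qed.

Definition decK n (K' : 'I_n * 'I_n -> nat) (q : 'I_n * 'I_n) : 'I_n * 'I_n -> nat :=
  fun p => if p == q then (K' q).-1 else K' p.

Lemma mderiv_HE (C : numClosedFieldType) n (a : 'I_n) (E : {set 'I_n * 'I_n})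
  (K' : 'I_n * 'I_n -> nat) :
  mderiv a (HE C E K') =
  \sum_(q in E) ((((q.1 == a)%:R + (q.2 == a)%:R) *+ K' q) *: HE C E (decK K' q)).
Proof.
rewrite /HE -big_enum /= mderiv_bigprod ?enum_uniq // big_enum /=.
apply: eq_bigr => q qE.
rewrite big_enum_cond /= [in RHS](bigD1 q) //= mderiv_exp mderivD !mderivXi.
rewrite /decK eqxx.
have -> : \prod_(i in E | i != q) ('X_i.1 + 'X_i.2) ^+ (if i == q then (K' q).-1 else K' i)
   = \prod_(i in E | i != q) (('X_i.1 + 'X_i.2) ^+ K' i : {mpoly C[n]}).
  by apply: eq_bigr => i /andP[_ /negbTE ->].
by rewrite -raddfD /= mulrnAl -mulrA mul_mpolyC scalerMnl.
Qed.

Inductive spanW (C : numClosedFieldType) n (E : {set 'I_n * 'I_n})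
  (K : 'I_n * 'I_n -> nat) (m : nat) : {mpoly C[n]} -> Prop :=
| sp0 : spanW E K m 0
| spH K' : admissible E K m K' -> spanW E K m (HE C E K')
| spD f g : spanW E K m f -> spanW E K m g -> spanW E K m (f + g)
| spZ c f : spanW E K m f -> spanW E K m (c *: f).

Lemma span_sub (C : numClosedFieldType) n E K m (f g : {mpoly C[n]}) :
  spanW E K m f -> spanW E K m g -> spanW E K m (f - g).
Proof. by move=> sf sg; rewrite -scaleN1r; apply: spD => //; apply: spZ. Qed.

Lemma span_sum (C : numClosedFieldType) n E K m (I : Type) (r : seq I) (P : pred I)
  (f : I -> {mpoly C[n]}) :
  (forall i, P i -> spanW E K m (f i)) -> spanW E K m (\sum_(i <- r | P i) f i).
Proof. by move=> H; apply: big_ind => //; [apply: sp0 | apply: spD]. Qed.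

Lemma span_deriv_HE (C : numClosedFieldType) n (a : 'I_n) E K m K' :
  admissible E K m.+1 K' -> spanW E K m (mderiv a (HE C E K')).
Proof.
case=> Hs Hle; rewrite mderiv_HE; apply: span_sum => q qE.
case: (posnP (K' q)) => [->|Kq].
  by rewrite mulr0n scale0r; apply: sp0.
apply: spZ; apply: spH; split.
  move: Hs; rewrite (bigD1 q) //= [in X in _ -> X](bigD1 q) //= /decK eqxx.
  have -> : (\sum_(i in E | i != q) (if i == q then (K' q).-1 else K' i))%N
     = (\sum_(i in E | i != q) K' i)%N.
    by apply: eq_bigr => i /andP[_ /negbTE ->].
  by rewrite -[in X in X -> _](prednK Kq) addSn => -[].
move=> p pE; rewrite /decK; case: eqP => [->|_]; last exact: Hle.
by apply: leq_trans (leq_pred _) (Hle q qE).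
Qed.

Lemma span_deriv (C : numClosedFieldType) n (a : 'I_n) E K m (F : {mpoly C[n]}) :
  spanW E K m.+1 F -> spanW E K m (mderiv a F).
Proof.
elim=> [|K' HK'|f g _ If _ Ig|c f _ If].
- by rewrite mderiv0; apply: sp0.
- exact: span_deriv_HE.
- by rewrite mderivD; apply: spD.
- by rewrite mderivZ; apply: spZ.
Qed.

Lemma inW_span (C : numClosedFieldType) n E K m (F : {mpoly C[n]}) :
  inW K E m F -> spanW E K m F.
Proof.
case=> N [c [k [Hadm ->]]]; apply: span_sum => t _; apply: spZ; apply: spH; exact: Hadm.
Qed.

Lemma span_inW (C : numClosedFieldType) n E K m (F : {mpoly C[n]}) :
  spanW E K m F -> inW K E m F.
Proof.
elim=> [|K' HK'|f g _ [N1 [c1 [k1 [A1 ->]]]] _ [N2 [c2 [k2 [A2 ->]]]]|c0 f _ [N [c [k [A ->]]]]].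
- exists 0%N, (fun _ => 0), (fun _ _ => 0%N); split; first by case.
  by rewrite big_ord0.
- exists 1%N, (fun _ => 1), (fun _ => K'); split => //.
  by rewrite big_ord1 scale1r.
- exists (N1 + N2)%N, (fun t => match split t with inl i => c1 i | inr j => c2 j end),
    (fun t => match split t with inl i => k1 i | inr j => k2 j end); split.
    by move=> t; case: (split t).
  rewrite big_split_ord /=; congr (_ + _); apply: eq_bigr => i _.
    by have -> : split (lshift N2 i) = inl i := unsplitK (inl i).
  by have -> : split (rshift N1 i) = inr i := unsplitK (inr i).
- exists N, (fun t => c0 * c t), k; split => //.
  by rewrite scaler_sumr; apply: eq_bigr => t _; rewrite scalerA.
Qed.

Lemma key (C : numClosedFieldType) n E K (G : {mpoly C[n]}) (s : seq ('I_n * 'I_n)) :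
  forall m (F : {mpoly C[n]}), spanW E K (m + size s) F ->
  inner (m + size s) F (G * \prod_(p <- s) ('X_p.1 - 'X_p.2)) != 0 ->
  exists F', spanW E K m F' /\ inner m F' G != 0.
Proof.
elim: s => [|p s IH] m F.
  by rewrite addn0 big_nil mulr1 => HF HI; exists F.
rewrite /= addnS big_cons => HF HI.
apply: (IH m (mderiv p.1 F - mderiv p.2 F)).
  by apply: span_sub; apply: span_deriv.
by rewrite -inner_step -mulrA [X in G * X]mulrC.
Qed.

Unset Implicit Arguments.

Theorem lemma6p1 (C : numClosedFieldType) (n : nat)
  (E E' : {set 'I_n * 'I_n}) (K : 'I_n * 'I_n -> nat) :
  two_subsets E' -> E \subset E' ->
  (exists F : {mpoly C[n]}, inW K E #|E'| F /\ inner #|E'| F (QE C E') != 0) ->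
  exists F' : {mpoly C[n]}, inW K E #|E| F' /\ inner #|E| F' (QE C E) != 0.
Proof.
move=> _ sEE' [F [HW HI]].
have eQ : QE C E' = QE C E * \prod_(p <- enum (E' :\: E)) ('X_p.1 - 'X_p.2).
  by rewrite /QE big_enum (big_setID E) /= (setIidPr sEE').
have eC : #|E'| = (#|E| + size (enum (E' :\: E)))%N.
  by rewrite -cardE -(cardsID E E') (setIidPr sEE').
rewrite eQ eC in HI; rewrite eC in HW.
have [F' [H1 H2]] := key (inW_span HW) HI.
by exists F'; split => //; apply: span_inW.
Qed.
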